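(* Let $0<c_1,c_2<1$ and $0<\eta\le1$ be constants and let $m$ be a sufficiently large integer. Let $H$ be a $3$-uniform hypergraph whose vertex set is the disjoint union of sets $A$ and $B$, such that every edge of $H$ contains exactly one vertex of $A$ and two vertices of $B$, with $|A|=c_1 m$ and $|B|\geq c_2 2^{m^2}$. If $d_3\left(A,\binom{B}{2}\right)\geq\eta$, then there exists a complete $3$-partite $3$-uniform hypergraph $H'(A',B',B'')$ contained in $H$, with $A'\subseteq A$, $B'$ and $B''$ disjoint subsets of $B$, and $|A'|=|B'|=|B''|=\eta|A|/2$.
   Context: $d_3\left(A,\binom{B}{2}\right)$ denotes the number of edges of $H$ (each consisting of one vertex of $A$ and a pair from $B$) divided by $|A|\binom{|B|}{2}$. A complete $3$-partite $3$-graph $H'(A',B',B'')$ contains every triple with one vertex in each of $A',B',B''$. *)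

(* Defs.v *)
From HB Require Import structures.
From mathcomp Require Import all_boot all_order all_algebra.
From mathcomp Require Import reals.
Set Implicit Arguments. Unset Strict Implicit. Unset Printing Implicit Defensive.
Import Order.TTheory GRing.Theory Num.Theory.
Local Open Scope ring_scope.

Definition AB_hypergraph (V : finType) (A B : {set V}) (E : {set {set V}}) : Prop :=
  [/\ [disjoint A & B], A :|: B = [set: V] &
      forall e, e \in E -> #|e| = 3%N /\ #|e :&: A| = 1%N /\ #|e :&: B| = 2%N].

Definition d3 (R : realType) (V : finType) (A B : {set V}) (E : {set {set V}}) : R :=
  (#|E|%:R) / ((#|A| * 'C(#|B|, 2))%N%:R).

Definition contains_K3 (V : finType) (E : {set {set V}}) (A' B' B'' : {set V}) : Prop :=
  forall a b c, a \in A' -> b \in B' -> c \in B'' -> [set a; b; c] \in E.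

(* Main.v *)
Require Import Defs.
From HB Require Import structures.
From mathcomp Require Import all_boot all_order all_algebra.
From mathcomp Require Import reals.
From mathcomp Require Import zify ring lra.
Import Order.TTheory GRing.Theory Num.Theory.
Set Implicit Arguments. Unset Strict Implicit. Unset Printing Implicit Defensive.

Definition Lp (V : finType) (A : {set V}) (E : {set {set V}}) (p : V * V) : {set V} :=
  [set a in A | [set a; p.1; p.2] \in E].

Lemma set3C (V : finType) (a b c : V) : [set a; c; b] = [set a; b; c].
Proof. by apply/setP => x; rewrite !inE; case: (x == a); case: (x == b); case: (x == c). Qed.

Lemma edge_shape (V : finType) (A B : {set V}) (E : {set {set V}}) e :
  AB_hypergraph A B E -> e \in E ->
  exists a b c, [/\ a \in A, b \in B, c \in B, b != c & e = [set a; b; c]].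
Proof.
case=> _ hU hE he; have [_ [h1 h2]] := hE e he.
move/eqP/cards1P: h1 => [a ha]; move/eqP/cards2P: h2 => [b [c [bc hbc]]].
have aA : a \in A by move: (set11 a); rewrite -ha inE => /andP[].
have bB : b \in B by move: (setU11 b [set c]); rewrite -hbc inE => /andP[].
have cB : c \in B by move: (set22 b c); rewrite -hbc inE => /andP[].
exists a, b, c; split => //.
have -> : e = (e :&: A) :|: (e :&: B) by rewrite -setIUr hU setIT.
rewrite ha hbc; apply/setP => x; by rewrite !inE orbA.
Qed.

Lemma count_edges (V : finType) (A B : {set V}) (E : {set {set V}}) :
  AB_hypergraph A B E ->
  (2 * #|E| <= \sum_(p : V * V | (p.1 \in B) && (p.2 \in B)) #|Lp A E p|)%N.
Proof.
move=> hAB.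
have -> : (\sum_(p : V * V | (p.1 \in B) && (p.2 \in B)) #|Lp A E p|)%N =
   (\sum_(p : V * V | (p.1 \in B) && (p.2 \in B)) \sum_(a | (a \in A) && ([set a; p.1; p.2] \in E)) 1)%N.
  by apply: eq_bigr => p _; rewrite sum1_card; apply: eq_card => a; rewrite inE.
rewrite pair_big_dep /=.
rewrite (partition_big (fun x : (V * V) * V => [set x.2; x.1.1; x.1.2]) (mem E)); last first.
  by move=> x /andP[_ /andP[]].
rewrite mulnC -sum_nat_const leq_sum // => e he.
rewrite sum1_card.
have [a [b [c [aA bB cB bc ee]]]] := edge_shape hAB he.
pose S := [set ((b, c), a); ((c, b), a)].
have -> : 2 = #|S|.
  rewrite cards2; case: eqP => // [[eq1 _]]; by rewrite eq1 eqxx in bc.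
apply: subset_leq_card; apply/subsetP => x; rewrite !inE => /orP[] /eqP -> /=.
  by rewrite unfold_in /= bB cB aA -ee he eqxx.
by rewrite unfold_in /= bB cB aA set3C -ee he eqxx.
Qed.

Lemma markov (I : finType) (P : pred I) (f : I -> nat) M t :
  (forall i, P i -> f i <= M)%N ->
  (\sum_(i | P i) f i <= #|[set i | P i && (t <= f i)]| * M + #|[set i | P i]| * t.-1)%N.
Proof.
move=> hM; rewrite (bigID (fun i => t <= f i)) /=; apply: leq_add.
  rewrite -sum1_card big_distrl /= [X in (_ <= X)%N](eq_bigl (fun i => P i && (t <= f i))); last by move=> i; rewrite inE.
  by apply: leq_sum => i /andP[Pi _]; rewrite mul1n hM.
rewrite -sum1_card big_distrl /=.
apply: (@leq_trans (\sum_(i | P i) t.-1)).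
  rewrite [X in (_ <= X)%N](bigID (fun i => t <= f i)) /=; apply: leq_trans (leq_addl _ _).
  by apply: leq_sum => i /andP[_]; rewrite -ltnNge; case: t => //= t; rewrite ltnS.
by rewrite [X in (_ <= X)%N](eq_bigl (fun i => P i)) ?(eq_bigr _ (fun i _ => mul1n _)) // => i; rewrite inE.
Qed.

Lemma sum_bool_card (I : finType) (P Q : pred I) :
  (\sum_(i | P i) (Q i : nat) = #|[set i | P i && Q i]|)%N.
Proof.
rewrite -sum1_card big_mkcond [RHS]big_mkcond /=; apply: eq_bigr => i _.
by rewrite inE; case: (P i); case: (Q i).
Qed.

Definition SS (V : finType) (A : {set V}) t := [set S : {set V} | S \subset A & #|S| == t].
Definition G (V : finType) (A B : {set V}) E (S : {set V}) b :=
  [set c in B | S \subset Lp A E (b, c)].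
Definition Pg (V : finType) (A B : {set V}) E t :=
  [set p : V * V | (p.1 \in B) && (p.2 \in B) && (t <= #|Lp A E p|)].

Lemma exists_sub (V : finType) (X : {set V}) t : (t <= #|X|)%N ->
  exists S : {set V}, S \subset X /\ #|S| = t.
Proof.
rewrite -bin_gt0 -cards_draws => /card_gt0P [S]; rewrite inE => /andP[h1 /eqP h2].
by exists S.
Qed.

Lemma Lp_sub (V : finType) (A : {set V}) E p : Lp A E p \subset A.
Proof. by apply/subsetP => a; rewrite inE => /andP[]. Qed.

Lemma step2 (V : finType) (A B : {set V}) E t :
  (#|Pg A B E t| <= \sum_(S in SS A t) \sum_(b in B) #|G A B E S b|)%N.
Proof.
apply: (@leq_trans (\sum_(p | (p.1 \in B) && (p.2 \in B)) \sum_(S in SS A t) (S \subset Lp A E p : nat))).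
  rewrite -sum1_card big_mkcond [X in (_ <= X)%N]big_mkcond /=; apply: leq_sum => p _.
  rewrite inE; case: ((p.1 \in B) && (p.2 \in B)) => //=; case: (boolP (t <= #|Lp A E p|)) => htL //.
  have [S [h1 h2]] := exists_sub htL.
  rewrite sum_bool_card; apply/card_gt0P; exists S; rewrite !inE h1 h2 eqxx andbT.
  by rewrite (subset_trans h1 (Lp_sub _ _ _)).
rewrite exchange_big /=; apply: leq_sum => S _.
rewrite -(pair_big_dep (fun b => b \in B) (fun b c => c \in B) (fun b c => (S \subset Lp A E (b, c) : nat))) /=.
apply: leq_sum => b _; rewrite sum_bool_card; apply: subset_leq_card; apply/subsetP => c.
by rewrite !inE.
Qed.

Definition Bg (V : finType) (A B : {set V}) E t D :=
  [set x : {set V} * V | (x.1 \in SS A t) && (x.2 \in B) && (D <= #|G A B E x.1 x.2|)].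

Lemma step3 (V : finType) (A B : {set V}) E t D :
  (\sum_(S in SS A t) \sum_(b in B) #|G A B E S b| <=
    #|Bg A B E t D| * #|B| + (#|SS A t| * #|B|) * D.-1)%N.
Proof.
rewrite (pair_big_dep (fun S => S \in SS A t) (fun S b => b \in B) (fun S b => #|G A B E S b|)) /=.
have -> : #|SS A t| * #|B| = #|[set x : {set V} * V | (x.1 \in SS A t) && (x.2 \in B)]|.
  by rewrite -cardsX; apply: eq_card => x; rewrite !inE.
apply: markov => x _; apply: subset_leq_card; apply/subsetP => c; by rewrite inE => /andP[].
Qed.

Lemma step4 (V : finType) (A B : {set V}) E t D :
  (forall (S T : {set V}), S \in SS A t -> T \subset B -> #|T| = t ->
     #|[set b in B | T \subset G A B E S b]| < t)%N ->
  (#|Bg A B E t D| * 'C(D, t) <= #|SS A t| * #|SS B t| * t.-1)%N.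
Proof.
move=> hno.
apply: (@leq_trans (\sum_(S in SS A t) \sum_(b in B) \sum_(T in SS B t) (T \subset G A B E S b : nat))).
  rewrite (pair_big_dep (fun S => S \in SS A t) (fun S b => b \in B)
     (fun S b => \sum_(T in SS B t) (T \subset G A B E S b : nat))) /=.
  rewrite -sum_nat_const big_mkcond [X in (_ <= X)%N]big_mkcond /=; apply: leq_sum => x _.
  rewrite inE; case: ((x.1 \in SS A t) && (x.2 \in B)) => //=; case: ifP => // hD.
  rewrite sum_bool_card.
  have -> : #|[set T | (T \in SS B t) && (T \subset G A B E x.1 x.2)]| = 'C(#|G A B E x.1 x.2|, t).
    rewrite -cards_draws; apply: eq_card => T; rewrite !inE.
    case hT: (T \subset G A B E x.1 x.2); rewrite ?andbF ?andbT //.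
    suff -> : T \subset B by [].
    apply: subset_trans hT _; by apply/subsetP => c; rewrite inE => /andP[].
  exact: leq_bin2l.
rewrite -[X in (_ <= X)%N]mulnA -sum_nat_const; apply: leq_sum => S hS.
rewrite exchange_big /= -sum_nat_const; apply: leq_sum => T hT.
move: hT; rewrite inE => /andP[hTB /eqP hTt].
rewrite sum_bool_card; have := hno S T hS hTB hTt.
case: t {hno hTt hS} => //= t; rewrite ltnS; apply: leq_trans; apply: subset_leq_card.
Qed.


Lemma ffact_ge (D t : nat) : ((D - t) ^ t <= D ^_ t)%N.
Proof.
have -> : ((D - t) ^ t = \prod_(i < t) (D - t))%N by rewrite prod_nat_const card_ord.
rewrite ffact_prod; apply: leq_prod => i _.
by apply: leq_sub2l; apply: ltnW.
Qed.

Lemma ffact_le (N t : nat) : (N ^_ t <= N ^ t)%N.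
Proof.
have -> : (N ^ t = \prod_(i < t) N)%N by rewrite prod_nat_const card_ord.
rewrite ffact_prod; apply: leq_prod => i _.
exact: leq_subr.
Qed.

Lemma exp_aux n k : (k + 2 + (n + k + 4) * n + n + n <= (n + k + 4) * (n + k + 4))%N.
Proof. nia. Qed.

Lemma pred_aux t m : (t.+1 <= m)%N -> (t.-1 < m)%N.
Proof. move=> h; apply: leq_trans h; lia. Qed.

Lemma arith (n k t N P W Bg s TT : nat) :
  (1 <= t)%N -> (t <= n)%N ->
  (2 ^ ((n + k + 4) ^ 2) <= N)%N ->
  (N * N <= 2 ^ (k + 1) * P + 2 * N)%N ->
  (P <= W)%N ->
  (W <= Bg * N + (s * N) * (N %/ 2 ^ (n + k + 3)).-1)%N ->
  (s <= 2 ^ n)%N ->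
  (TT * t`! = N ^_ t)%N ->
  (Bg * 'C(N %/ 2 ^ (n + k + 3), t) <= s * TT * t.-1)%N -> False.
Proof.
move=> t1 tn hN h1 hPW hW hs hTT h4; rewrite -mulnn in hN.
set d := 2 ^ (n + k + 3) in hW h4.
set D := N %/ d in hW h4.
have d0 : (0 < d)%N by rewrite expn_gt0.
have hDd : (D * d <= N)%N by apply: leq_trunc_div.
have hDd2 : (N < D.+1 * d)%N by apply: ltn_ceil.
have tn2 : (t.+1 <= 2 ^ n)%N by apply: leq_ltn_trans (ltn_expl _ _); rewrite ?ltnS.
have hexp : forall a b, (a <= b)%N -> (2 ^ a <= 2 ^ b)%N by move=> a b; apply: leq_pexp2l.
set u := 2 ^ (k + 1).
have hd : (d = u * 2 ^ n * 4)%N by rewrite /d /u -[4]/(2 ^ 2) -!expnD; f_equal; lia.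
have hbig : (2 * d * 2 ^ n <= N)%N.
  apply: leq_trans hN; rewrite /d -[2 * _]/(2 ^ 1 * _) -!expnD; apply: hexp; nia.
have N8 : (8 <= N)%N.
  apply: leq_trans hN; rewrite -[8]/(2 ^ 3); apply: hexp; nia.
have hc : (4 * (u * (s * N * D.-1)) <= N * N)%N.
  have -> : (4 * (u * (s * N * D.-1)) = N * (D.-1 * (u * s * 4)))%N by ring.
  apply: leq_mul => //; apply: leq_trans hDd; rewrite hd; apply: leq_mul; first exact: leq_pred.
  by rewrite leq_mul2r leq_mul2l hs orbT.
have hBg : (N <= 2 ^ (k + 2) * Bg)%N.
  have e2 : (2 ^ (k + 2) = 2 * u)%N by rewrite /u addnS expnS.
  rewrite e2.
  have e1 : (N * N <= u * Bg * N + u * (s * N * D.-1) + 2 * N)%N.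
    apply: leq_trans h1 _; rewrite leq_add2r -mulnA -mulnDr leq_mul2l.
    by rewrite (leq_trans hPW hW) orbT.
  have e3 : (8 * N <= N * N)%N by apply: leq_mul.
  have e4 : (N * (2 * N) <= N * (4 * (u * Bg)))%N.
    move: e1 e3 hc; set Y := u * (s * N * D.-1); set X := u * Bg.
    rewrite !mulnA [N * 2]mulnC [N * 4]mulnC -!mulnA; lia.
  rewrite leq_pmul2l in e4; last by apply: leq_trans N8.
  lia.
have hDt : (N <= 2 * d * (D - t))%N.
  have f1 : (2 * d * t.+1 <= N)%N by apply: leq_trans hbig; rewrite leq_mul2l tn2 orbT.
  move: hDd2; rewrite mulSn => hDd3.
  rewrite -mulnA mulnBr; move: f1 hDd3; rewrite [D * d]mulnC mulnS.
  set e := d * D; set f := d * t; rewrite -mulnA -/f; lia.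
set Z := 2 * d in hDt hbig.
have hf : (Bg * D ^_ t <= 2 ^ n * N ^ t * t.-1)%N.
  have h5 := leq_mul h4 (leqnn t`!).
  rewrite -mulnA bin_ffact in h5; apply: leq_trans h5 _.
  have -> : (s * TT * t.-1 * t`! = s * (TT * t`!) * t.-1)%N by ring.
  rewrite hTT leq_mul2r; apply/orP; right; apply: leq_mul => //; exact: ffact_le.
have hg : (N ^ t <= Z ^ t * (D - t) ^ t)%N by rewrite -expnMn leq_exp2r.
have hh : (N * N ^ t <= 2 ^ (k + 2) * Z ^ t * (2 ^ n * N ^ t * t.-1))%N.
  apply: leq_trans (leq_mul hBg hg) _.
  have -> : (2 ^ (k + 2) * Bg * (Z ^ t * (D - t) ^ t) = 2 ^ (k + 2) * Z ^ t * (Bg * (D - t) ^ t))%N by ring.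
  rewrite leq_mul2l; apply/orP; right; apply: leq_trans hf.
  by rewrite leq_mul2l ffact_ge orbT.
have Nt0 : (0 < N ^ t)%N by rewrite expn_gt0 (leq_trans _ N8).
have hi : (N <= 2 ^ (k + 2) * Z ^ t * 2 ^ n * t.-1)%N.
  have e : (2 ^ (k + 2) * Z ^ t * (2 ^ n * N ^ t * t.-1) = N ^ t * (2 ^ (k + 2) * Z ^ t * 2 ^ n * t.-1))%N by ring.
  by rewrite e mulnC leq_pmul2l in hh.
have hZ : (Z = 2 ^ (n + k + 4))%N by rewrite /Z /d -[2 * _]/(2 ^ 1 * _) -expnD; f_equal; lia.
have hZt : (Z ^ t <= 2 ^ ((n + k + 4) * n))%N.
  rewrite hZ expnM; apply: leq_pexp2l => //; exact: expn_gt0.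
have ht : (t.-1 < 2 ^ n)%N by apply: pred_aux.
have hj : (2 ^ (k + 2) * Z ^ t * 2 ^ n * t.-1 < 2 ^ (k + 2) * 2 ^ ((n + k + 4) * n) * 2 ^ n * 2 ^ n)%N.
  apply: (@leq_ltn_trans (2 ^ (k + 2) * 2 ^ ((n + k + 4) * n) * 2 ^ n * t.-1)).
    by rewrite !leq_mul2r leq_mul2l hZt !orbT.
  by rewrite ltn_pmul2l // !muln_gt0 !expn_gt0.
have hk : (2 ^ (k + 2) * 2 ^ ((n + k + 4) * n) * 2 ^ n * 2 ^ n <= 2 ^ ((n + k + 4) * (n + k + 4)))%N.
  rewrite -!expnD; apply: hexp; exact: exp_aux.
have := leq_trans (leq_ltn_trans hi hj) (leq_trans hk hN).
by rewrite ltnn.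
Qed.


Lemma core (V : finType) (A B : {set V}) (E : {set {set V}}) n k t :
  AB_hypergraph A B E -> #|A| = n -> (1 <= t)%N -> (t <= n)%N ->
  (2 ^ ((n + k + 4) ^ 2) <= #|B|)%N ->
  (#|B| * #|B| <= 2 ^ (k + 1) * #|Pg A B E t| + 2 * #|B|)%N ->
  exists A' B' B'' : {set V},
    [/\ A' \subset A, B' \subset B, B'' \subset B & [disjoint B' & B'']] /\
    contains_K3 E A' B' B'' /\ [/\ #|A'| = #|B'|, #|B'| = #|B''| & #|A'| = t].
Proof.
move=> hAB hn t1 tn hN h1.
case: (boolP [exists S : {set V}, exists T : {set V}, (S \in SS A t) && (T \subset B) &&
   (#|T| == t) && (t <= #|[set b in B | T \subset G A B E S b]|)]).
  case/existsP => S /existsP [T /andP[/andP[/andP[hS hTB] /eqP hT] hbig]].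
  have [B' [hB' cB']] := exists_sub hbig.
  move: hS; rewrite inE => /andP[hSA /eqP hSt].
  have K3 : contains_K3 E S B' T.
    move=> a b c ha hb hc; move: (subsetP hB' b hb); rewrite inE => /andP[_ /subsetP hTG].
    move: (hTG c hc); rewrite inE => /andP[_ /subsetP hSL].
    by move: (hSL a ha); rewrite inE => /andP[].
  exists S, B', T; split; last by split => //; split; congruence.
  split => //.
    by apply: subset_trans hB' _; apply/subsetP => b; rewrite inE => /andP[].
  rewrite -setI_eq0; apply/eqP/setP => x; rewrite !inE; apply/negP => /andP[hx1 hx2].
  have : (0 < #|S|)%N by rewrite hSt.
  case/card_gt0P => a ha.
  have := K3 a x x ha hx1 hx2.
  case: hAB => _ _ hE /hE [h3 _].
  have : (#|[set a; x; x]| <= 2)%N.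
    have -> : [set a; x; x] = [set a; x] by apply/setP => y; rewrite !inE; case: (y == a); case: (y == x).
    by rewrite cards2; case: (a != x).
  by rewrite h3.
rewrite negb_exists => /forallP hno.
exfalso.
pose D := #|B| %/ 2 ^ (n + k + 3).
apply: (@arith n k t #|B| #|Pg A B E t| (\sum_(S in SS A t) \sum_(b in B) #|G A B E S b|)
   #|Bg A B E t D| #|SS A t| #|SS B t|) => //.
- exact: step2.
- exact: step3.
- rewrite -hn -card_powerset; apply: subset_leq_card; apply/subsetP => S.
  by rewrite !inE => /andP[].
- by rewrite cards_draws bin_ffact.
- apply: step4 => S T hS hTB hT; move: (hno S); rewrite negb_exists => /forallP /(_ T).
  by rewrite hS hTB hT eqxx /= -ltnNge.
Qed.

Unset Implicit Arguments.
Local Open Scope ring_scope.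

Lemma pow2_bound (R : realType) (x : R) : 0 < x -> exists k : nat, 1 <= 2%:R ^+ k * x.
Proof.
move=> x0; have hx : 0 <= x^-1 by rewrite invr_ge0 ltW.
set K := Num.Def.archi_bound x^-1.
have h1 := archi_boundP hx.
exists K.
have h2 : K%:R <= 2%:R ^+ K :> R by rewrite -natrX ler_nat ltnW // ltn_expl.
have h3 : x^-1 <= 2%:R ^+ K by apply: le_trans h2; apply: ltW.
by rewrite -ler_pdivrMr // mul1r.
Qed.

Lemma nat_bound (R : realType) (x : R) : exists q : nat, x <= q%:R.
Proof.
have hx : 0 <= Num.max x 0 by rewrite le_max lexx orbT.
exists (Num.Def.archi_bound (Num.max x 0)).
apply: le_trans (ltW (archi_boundP hx)); by rewrite le_max lexx.
Qed.

Lemma real_h1 (R : realType) (eta : R) (n N E Pc t k : nat) :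
  0 < eta -> 1 <= 2%:R ^+ k * eta -> (0 < n)%N ->
  2 * (t.-1)%:R <= eta * n%:R ->
  eta * (n * (N * N.-1))%:R <= (2 * E)%:R ->
  (2 * E <= Pc * n + N * N * t.-1)%N ->
  (N * N <= 2 ^ (k + 1) * Pc + 2 * N)%N.
Proof.
move=> he hk hn ht hE hPc.
rewrite -(ler_nat R) in hPc.
have hN1 : N%:R - 1 <= (N.-1)%:R :> R.
  by case: N {hE hPc} => [|N] /=; rewrite ?subn1 //= ?sub0r ?lerN10 // -natr1 addrK.
rewrite -(ler_nat R) !natrD !natrM natrX addn1 exprSr.
move: hE hPc; rewrite !natrM !natrD !natrM.
set x := N%:R; set y := (t.-1)%:R; set nn := n%:R; set P := Pc%:R; set u := 2%:R ^+ k.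
have hnn : 0 < nn by rewrite ltr0n.
have hx : 0 <= x by rewrite ler0n.
have hy : 0 <= y by rewrite ler0n.
have hP : 0 <= P by rewrite ler0n.
have hu : 0 <= u by rewrite exprn_ge0 // ler0n.
move=> hE hPc.
have hA : eta * nn * (x * (x - 1)) <= P * nn + x * x * y.
  apply: le_trans hPc; apply: le_trans hE.
  have h0 : x * (x - 1) <= x * N.-1%:R by rewrite ler_wpM2l.
  have hen : 0 <= eta * nn by rewrite mulr_ge0 ?ltW.
  have := ler_wpM2l hen h0; by rewrite !mulrA.
have hB : 2 * (x * x * y) <= x * x * (eta * nn).
  have hxx : 0 <= x * x by rewrite mulr_ge0.
  by rewrite mulrCA ler_wpM2l.
have hC : nn * (eta * (x * x - 2 * x)) <= nn * (2 * P) by nra.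
rewrite ler_pM2l // in hC.
have [hneg|hpos] := lerP (x * x - 2 * x) 0.
  have : 0 <= u * 2 * P by rewrite !mulr_ge0 ?ler0n.
  lra.
have : x * x - 2 * x <= u * eta * (x * x - 2 * x).
  rewrite -{1}[x * x - 2 * x]mul1r ler_wpM2r // ltW //.
have : u * (eta * (x * x - 2 * x)) <= u * (2 * P) by rewrite ler_wpM2l.
nra.
Qed.

Lemma sq_aux n k j m : (n + (k + j + 4) <= m)%N -> ((n + k + 4) ^ 2 + j <= m ^ 2)%N.
Proof. move=> h; rewrite -!mulnn; nia. Qed.

Lemma bin2_mul N : (N * N.-1 = 'C(N, 2) * 2)%N.
Proof. by have h := bin_ffact N 2; rewrite ffactnS ffactn1 in h; rewrite -h. Qed.

Theorem lemma5 (R : realType) (c1 c2 eta : R) :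
  0 < c1 < 1 -> 0 < c2 < 1 -> 0 < eta <= 1 ->
  exists M : nat, forall m : nat, (M <= m)%N ->
  forall (V : finType) (A B : {set V}) (E : {set {set V}}),
    AB_hypergraph A B E ->
    (#|A|%:R = c1 * m%:R) ->
    (c2 * 2%:R ^+ (m ^ 2) <= #|B|%:R) ->
    eta <= d3 R A B E ->
    exists A' B' B'' : {set V},
      [/\ A' \subset A, B' \subset B, B'' \subset B & [disjoint B' & B'']] /\
      contains_K3 E A' B' B'' /\
      [/\ #|A'| = #|B'|, #|B'| = #|B''| & eta * #|A|%:R / 2%:R <= #|A'|%:R].
Proof.
move=> /andP[c10 c11] /andP[c20 c21] /andP[e0 e1].
have [k hk] := @pow2_bound R eta e0.
have [j hj] := @pow2_bound R c2 c20.
have c1' : 0 < 1 - c1 by rewrite subr_gt0.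
have [q hq] := @nat_bound R (1 - c1)^-1.
have hq1 : 1 <= q%:R * (1 - c1).
  by rewrite -ler_pdivrMr // mul1r.
exists (q * (k + j + 4)).+1 => m hm V A B E hAB hA hB hd.
have m0 : (0 < m)%N by apply: leq_trans hm.
have hn0 : (0 < #|A|)%N by rewrite -(ltr_nat R) hA mulr_gt0 // ltr0n.
have hnm : (#|A| + (k + j + 4) <= m)%N.
  rewrite -(ler_nat R) natrD hA.
  have hm' : (q * (k + j + 4))%:R <= m%:R :> R by rewrite ler_nat ltnW.
  rewrite natrM in hm'.
  move: hm'; set K := (k + j + 4)%:R; set qq := q%:R; set mm := m%:R => hm'.
  have hK : 0 <= K by rewrite ler0n.
  have hqq : 0 <= qq by rewrite ler0n.
  nra.
have hNb : (2 ^ ((#|A| + k + 4) ^ 2) <= #|B|)%N.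
  have h2 : (2 ^ (m ^ 2) <= 2 ^ j * #|B|)%N.
    rewrite -(ler_nat R) natrM !natrX.
    have hp : 0 <= 2%:R ^+ (m ^ 2) :> R by rewrite exprn_ge0 // ler0n.
    have hpj : 0 <= 2%:R ^+ j :> R by rewrite exprn_ge0 // ler0n.
    move: hB hj hp hpj; set a := 2%:R ^+ (m ^ 2); set b := 2%:R ^+ j; nra.
  have h3 := @sq_aux _ _ _ _ hnm.
  have h4 : (2 ^ ((#|A| + k + 4) ^ 2) * 2 ^ j <= 2 ^ j * #|B|)%N.
    by apply: leq_trans h2; rewrite -expnD leq_pexp2l.
  by rewrite mulnC leq_pmul2l ?expn_gt0 in h4.
pose P := fun t : nat => eta * #|A|%:R / 2%:R <= t%:R.
have PA : P #|A|.
  rewrite /P ler_pdivrMr ?ltr0n //.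
  have : 0 < #|A|%:R :> R by rewrite ltr0n.
  nra.
have exP : exists t, P t by exists #|A|.
case: (ex_minnP exP) => t ht tmin.
have t1 : (1 <= t)%N.
  case: t ht tmin => // ht; move: ht; rewrite /P ler_pdivrMr ?ltr0n // mul0r.
  have : 0 < #|A|%:R :> R by rewrite ltr0n.
  move=> h1 h2 _; exfalso; move: h2; rewrite leNgt => /negP; apply; exact: mulr_gt0.
have tn : (t <= #|A|)%N by apply: tmin.
have ht2 : 2 * (t.-1)%:R <= eta * #|A|%:R.
  have : ~~ P t.-1.
    apply/negP => hP; have := tmin _ hP; move: t1; clear; case: t => // t _; by rewrite ltnn.
  rewrite /P -ltNge ltr_pdivlMr ?ltr0n // => h; rewrite mulrC; exact: ltW.
have hden : 0 < (#|A| * 'C(#|B|, 2))%:R :> R.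
  rewrite ltr0n lt0n; apply/negP => /eqP h0; move: hd; rewrite /d3 h0 invr0 mulr0.
  by rewrite leNgt e0.
have hE : eta * (#|A| * (#|B| * #|B|.-1))%:R <= (2 * #|E|)%:R.
  rewrite bin2_mul mulnA natrM mulrA [(2 * _)%:R]natrM [X in _ <= X]mulrC ler_pM2r ?ltr0n //.
  by rewrite -ler_pdivlMr.
have hPc : (2 * #|E| <= #|Pg A B E t| * #|A| + #|B| * #|B| * t.-1)%N.
  apply: leq_trans (count_edges hAB) _.
  apply: leq_trans (@markov _ _ _ #|A| t _) _.
    by move=> p _; apply: subset_leq_card; apply: Lp_sub.
  rewrite leq_add2l -cardsX leq_mul2r; apply/orP; right.
  by apply: subset_leq_card; apply/subsetP => p; rewrite !inE.
have h1 := @real_h1 R eta #|A| #|B| #|E| #|Pg A B E t| t k e0 hk hn0 ht2 hE hPc.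
have [A' [B' [B'' [hs [hK [hc1 hc2 hc3]]]]]] := core hAB (erefl _) t1 tn hNb h1.
exists A', B', B''; split => //; split => //; split => //.
by rewrite hc3.
Qed.
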